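(* Let $n\geq2$ be an integer, $b:=-n+i$, $D=\{0,m\}$ with $2\le m\le n^2$. Let $\alpha\in E_{n,D}$ and suppose there is exactly one sequence $(\alpha_j)_{j\ge1}$ with $\alpha_j\in\{0,\pm m\}$ and $\alpha=\sum_{j\ge1}\alpha_jb^{-j}$. Let $\gamma:=\sum_{j\ge1}\gamma_jb^{-j}$ where $\gamma_j:=\min(D\cap(D+\alpha_j))$. Then, with $C(\alpha):=C_{n,D}\cap(C_{n,D}+\alpha)$, $$C(\alpha)-\gamma=\Big\{\sum_{j\ge1}z_jb^{-j}: z_j\in D,\ z_j\le m-|\alpha_j|\text{ for all }j\Big\},$$ and $C(\alpha)-\gamma$ is a subset of $C_{n,D}$.
   Context: $C_{n,D}$ is the attractor of $\{z\mapsto b^{-1}(z+d): d\in D\}$, i.e. $C_{n,D}=\{\sum_{j\ge1}d_jb^{-j}: d_j\in D\}$. $E_{n,D}$ is the attractor of $\{z\mapsto b^{-1}(z+\delta):\delta\in D-D\}$, i.e. $E_{n,D}=\{\sum_{j\ge1}\delta_jb^{-j}:\delta_j\in D-D\}$. $X-\gamma=\{x-\gamma:x\in X\}$. *)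

(* Defs.v *)
From Stdlib Require Import Reals ZArith List.
From Coquelicot Require Import Coquelicot.
Import ListNotations.
Open Scope C_scope.

Definition base (n : nat) : C := (- INR n, 1)%R.

(* the value of the radix expansion sum_{j>=1} d_j b^{-j}; digits are integers,
   index shifted: d 0 is the digit d_1. *)
Definition radix_term (n : nat) (d : nat -> Z) (j : nat) : C :=
  RtoC (IZR (d j)) * Cpow (/ base n) (S j).

Definition has_expansion (n : nat) (d : nat -> Z) (z : C) : Prop :=
  is_series (radix_term n d) z.

Definition Dset (m : Z) : list Z := [0%Z; m].

Definition CnD (n : nat) (D : list Z) (z : C) : Prop :=
  exists d : nat -> Z, (forall j, In (d j) D) /\ has_expansion n d z.

Definition Ddiff (D : list Z) : list Z :=
  flat_map (fun x => map (fun y => (x - y)%Z) D) D.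

Definition EnD (n : nat) (D : list Z) (z : C) : Prop :=
  exists d : nat -> Z, (forall j, In (d j) (Ddiff D)) /\ has_expansion n d z.

(* minimum of a list of integers (default 0 on the empty list, never used here) *)
Definition Zlist_min (l : list Z) : Z :=
  match l with [] => 0%Z | x :: t => fold_right Z.min x t end.

Definition D_inter_shift (D : list Z) (a : Z) : list Z :=
  filter (fun d => existsb (fun d' => Z.eqb d (d' + a)) D) D.

Definition gamma_digit (D : list Z) (a : Z) : Z := Zlist_min (D_inter_shift D a).

Definition translate (S : C -> Prop) (a : C) (z : C) : Prop :=
  exists c, S c /\ z = c + a.

(* Main.v *)
Require Import Defs.
From Stdlib Require Import Reals ZArith List Lia.
From Coquelicot Require Import Coquelicot.
Import ListNotations.
Open Scope C_scope.

Lemma exp_minus n d d' x y : has_expansion n d x -> has_expansion n d' y ->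
  has_expansion n (fun j => (d j - d' j)%Z) (x - y).
Proof.
  intros H1 H2. pose proof (is_series_minus _ _ _ _ H1 H2) as H.
  eapply is_series_ext; [|exact H]. intros j. simpl.
  unfold radix_term. change (plus ?a (opp ?b)) with (a - b).
  rewrite minus_IZR, RtoC_minus. ring.
Qed.

Lemma exp_plus n d d' x y : has_expansion n d x -> has_expansion n d' y ->
  has_expansion n (fun j => (d j + d' j)%Z) (x + y).
Proof.
  intros H1 H2. pose proof (is_series_plus _ _ _ _ H1 H2) as H.
  eapply is_series_ext; [|exact H]. intros j. simpl.
  unfold radix_term. change (plus ?a ?b) with (a + b).
  rewrite plus_IZR, RtoC_plus. ring.
Qed.

Lemma exp_unique n d x y : has_expansion n d x -> has_expansion n d y -> x = y.
Proof.
  intros H1 H2. eapply (filterlim_locally_unique (F := eventually)); eauto.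
Qed.

Lemma exp_ext n d d' x : (forall j, d j = d' j) -> has_expansion n d x -> has_expansion n d' x.
Proof.
  intros E H. eapply is_series_ext; [|exact H]. intros j. unfold radix_term. now rewrite E.
Qed.

Lemma gd m a : (0 < m)%Z -> In a [0%Z; m; (- m)%Z] ->
  gamma_digit (Dset m) a = (if Z.eqb a m then m else 0)%Z.
Proof.
  intros Hm [<-|[<-|[<-|[]]]]; unfold gamma_digit, D_inter_shift, Dset; cbn -[Z.eqb Z.add Z.opp Z.min];
  repeat (match goal with |- context [Z.eqb ?x ?y] => destruct (Z.eqb_spec x y) end; cbn -[Z.eqb Z.add Z.opp Z.min]);
  try lia.
Qed.

Theorem lemma5p6 (n : nat) (m : Z) (alpha : C) (a : nat -> Z) :
  (2 <= n)%nat ->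
  (2 <= m <= Z.of_nat n ^ 2)%Z ->
  EnD n (Dset m) alpha ->
  (forall j, In (a j) [0%Z; m; (- m)%Z]) ->
  has_expansion n a alpha ->
  (forall a' : nat -> Z, (forall j, In (a' j) [0%Z; m; (- m)%Z]) ->
     has_expansion n a' alpha -> forall j, a' j = a j) ->
  forall gamma : C,
  has_expansion n (fun j => gamma_digit (Dset m) (a j)) gamma ->
  (forall w : C,
     (exists x, CnD n (Dset m) x /\ translate (CnD n (Dset m)) alpha x /\ w = x - gamma)
     <->
     (exists z : nat -> Z,
        (forall j, In (z j) (Dset m) /\ (z j <= m - Z.abs (a j))%Z) /\
        has_expansion n z w)) /\
  (forall w : C,
     (exists x, CnD n (Dset m) x /\ translate (CnD n (Dset m)) alpha x /\ w = x - gamma) ->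
     CnD n (Dset m) w).
Proof.
  intros Hn Hm _ Ha Hexp Huniq gamma Hg.
  assert (Hm0 : (0 < m)%Z) by lia.
  assert (fwd : forall w,
     (exists x, CnD n (Dset m) x /\ translate (CnD n (Dset m)) alpha x /\ w = x - gamma) ->
     (exists z : nat -> Z,
        (forall j, In (z j) (Dset m) /\ (z j <= m - Z.abs (a j))%Z) /\
        has_expansion n z w)).
  { intros w (x & (d & Hd & Hx) & (c & (d' & Hd' & Hc) & Ex) & Ew).
    assert (Hal : has_expansion n (fun j => (d j - d' j)%Z) alpha).
    { replace alpha with (x - c) by (rewrite Ex; ring). now apply exp_minus. }
    assert (Hdig : forall j, In (d j - d' j)%Z [0%Z; m; (- m)%Z]).
    { intros j. specialize (Hd j). specialize (Hd' j). unfold Dset in *; simpl in *.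
      destruct Hd as [<-|[<-|[]]]; destruct Hd' as [<-|[<-|[]]]; lia. }
    pose proof (Huniq _ Hdig Hal) as U.
    exists (fun j => (d j - gamma_digit (Dset m) (a j))%Z). split.
    - intros j. rewrite (gd m (a j) Hm0 (Ha j)). specialize (U j).
      specialize (Hd j). specialize (Hd' j). unfold Dset in *; simpl in *.
      rewrite <- U.
      destruct Hd as [E1|[E1|[]]]; destruct Hd' as [E2|[E2|[]]]; rewrite <- E1, <- E2;
        repeat (match goal with |- context [Z.eqb ?x ?y] => destruct (Z.eqb_spec x y) end); lia.
    - rewrite Ew. now apply exp_minus. }
  split; [split; [apply fwd|] |].
  - intros (z & Hz & Hw).
    set (c := fun j => (z j + gamma_digit (Dset m) (a j))%Z).
    assert (Hc : forall j, In (c j) (Dset m) /\ In (c j - a j)%Z (Dset m)).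
    { intros j. unfold c. rewrite (gd m (a j) Hm0 (Ha j)). specialize (Hz j).
      specialize (Ha j). unfold Dset in *; simpl in *.
      destruct Hz as [[<-|[<-|[]]] Hle]; destruct Ha as [E|[E|[E|[]]]]; rewrite <- E in *;
        destruct (Z.eqb_spec 0 m); destruct (Z.eqb_spec m m); destruct (Z.eqb_spec (-m) m);
        try lia. }
    assert (Hx : has_expansion n c (w + gamma)) by now apply exp_plus.
    exists (w + gamma). split; [|split].
    + exists c. split; [intros j; apply Hc|exact Hx].
    + exists (w + gamma - alpha). split; [|ring].
      exists (fun j => (c j - a j)%Z). split; [intros j; apply Hc|].
      now apply exp_minus.
    + ring.
  - intros w H. destruct (fwd w H) as (z & Hz & Hw). exists z. split; auto.
    intros j; apply Hz.
Qed.
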